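(* Let $S_1$ and $S_2$ be two finite collections of nonvertical line segments in the plane with $|S_1\cup S_2|=n$, such that no two segments of $S_1$ intersect (segments of $S_2$ may intersect each other). Then the number of intersection points between a segment of $S_1$ and a segment of $S_2$ that lie on an envelope (lower or upper) of $S_1$ and also on an envelope (lower or upper) of $S_2$ is $O(n)$.
   Context: For a finite collection $S$ of nonvertical segments (viewed as graphs of partial functions $\mathbb R\to\mathbb R$), the lower envelope is the pointwise minimum of these graphs (the parts visible from $y=-\infty$), and the upper envelope is the pointwise maximum (the parts visible from $y=+\infty$). *)

(* Defs.v *)
From mathcomp Require Import all_boot all_order all_algebra.
From mathcomp Require Import reals.
Set Implicit Arguments. Unset Strict Implicit. Unset Printing Implicit Defensive.
Import Order.TTheory GRing.Theory Num.Theory.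
Local Open Scope ring_scope.

Section Segments.
Variable R : realType.

Definition point := (R * R)%type.

Definition seg := (point * point)%type.

Definition sx1 (s : seg) : R := s.1.1.
Definition sy1 (s : seg) : R := s.1.2.
Definition sx2 (s : seg) : R := s.2.1.
Definition sy2 (s : seg) : R := s.2.2.

(* Nonvertical segment, with endpoints listed from left to right. *)
Definition nonvertical (s : seg) : Prop := sx1 s < sx2 s.

(* The segment viewed as a partial function R -> R: domain [x1, x2] ... *)
Definition indom (s : seg) (x : R) : Prop := sx1 s <= x <= sx2 s.

Definition segval (s : seg) (x : R) : R :=
  sy1 s + (sy2 s - sy1 s) * (x - sx1 s) / (sx2 s - sx1 s).

Definition on_seg (s : seg) (p : point) : Prop :=
  indom s p.1 /\ p.2 = segval s p.1.

Definition on_lower_env (S : seq seg) (p : point) : Prop :=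
  (exists2 s, s \in S & on_seg s p) /\
  (forall s, s \in S -> indom s p.1 -> p.2 <= segval s p.1).

Definition on_upper_env (S : seq seg) (p : point) : Prop :=
  (exists2 s, s \in S & on_seg s p) /\
  (forall s, s \in S -> indom s p.1 -> segval s p.1 <= p.2).

Definition on_env (S : seq seg) (p : point) : Prop :=
  on_lower_env S p \/ on_upper_env S p.

End Segments.

(* Main.v *)
Require Import Defs.
From mathcomp Require Import all_boot all_order all_algebra.
From mathcomp Require Import reals boolp ring lra zify.
Import Order.TTheory GRing.Theory Num.Theory.
Local Open Scope ring_scope.

Definition slope {R : realType} (s : seg R) : R := (sy2 s - sy1 s) / (sx2 s - sx1 s).

Lemma segval_aff {R : realType} (s : seg R) x z :
  segval s x = segval s z + slope s * (x - z).
Proof. rewrite /segval /slope; ring. Qed.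

Definition btw {R : realType} (z z' e : R) : bool := (z <= e <= z') || (z' <= e <= z).

Lemma btwC {R : realType} (z z' e : R) : btw z z' e = btw z' z e.
Proof. by rewrite /btw orbC. Qed.

Lemma indom_move {R : realType} (s : seg R) z z' :
  indom s z -> ~~ btw z z' (sx1 s) -> ~~ btw z z' (sx2 s) -> indom s z'.
Proof.
rewrite /indom /btw => /andP[h1 h2].
rewrite !negb_or !negb_and -!ltNge.
move=> /andP[/orP[]? /orP[]?] /andP[/orP[]? /orP[]?]; apply/andP; split; lra.
Qed.

Definition envb {R : realType} (S : seq (seg R)) (b : bool) (p : point R) : Prop :=
  if b then on_lower_env S p else on_upper_env S p.

Lemma class_inj {R : realType} (S : seq (seg R)) b (p q : point R) :
  envb S b p -> envb S b q -> p.1 = q.1 -> p = q.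
Proof.
case: p q => p1 p2 [q1 q2] /=.
case: b; rewrite /envb /on_lower_env /on_upper_env /on_seg /=;
  move=> [[s sS [ds es]] hp] [[s' sS' [ds' es']] hq] e; subst q1.
- have h1 := hp s' sS' ds'; have h2 := hq s sS ds.
  by congr pair; apply/eqP; rewrite eq_le; apply/andP; split; lra.
- have h1 := hp s' sS' ds'; have h2 := hq s sS ds.
  by congr pair; apply/eqP; rewrite eq_le; apply/andP; split; lra.
Qed.
Arguments indom_move {R s z z'}.
Arguments class_inj {R S b p q}.


Definition disjS {R : realType} (S1 : seq (seg R)) :=
  forall s s', s \in S1 -> s' \in S1 -> s != s' ->
       forall p : point R, ~ (on_seg s p /\ on_seg s' p).

Definition onceS {R : realType} (S1 S2 : seq (seg R)) :=
  forall s1 s2, s1 \in S1 -> s2 \in S2 ->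
       forall p q : point R, on_seg s1 p -> on_seg s2 p ->
         on_seg s1 q -> on_seg s2 q -> p = q.

Lemma slopes_differ {R : realType} (S1 S2 : seq (seg R)) (a t : seg R) (p : point R) :
  onceS S1 S2 -> a \in S1 -> t \in S2 -> on_seg a p -> on_seg t p ->
  p.1 != sx2 a -> p.1 != sx2 t -> slope a != slope t.
Proof.
move=> hon aS tS [da ea] [dt et] na nt; apply/negP => /eqP es.
move: da dt; rewrite /indom => /andP[da1 da2] /andP[dt1 dt2].
have [x' [h1 [h2 h3]]] : exists x', p.1 < x' /\ x' <= sx2 a /\ x' <= sx2 t.
  have [hle|hle] := leP (sx2 a) (sx2 t).
  - exists (sx2 a); split; last by split.
    by rewrite lt_neqAle da2 na.
  - exists (sx2 t); split; last by split => //; apply: ltW.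
    by rewrite lt_neqAle dt2 nt.
pose q : point R := (x', segval a x').
have qa : on_seg a q by split => //=; apply/andP; split => //; lra.
have qt : on_seg t q.
  split => /=; first by apply/andP; split => //; lra.
  rewrite (segval_aff a x' p.1) (segval_aff t x' p.1) -ea -et es //.
have := hon a t aS tS p q (conj (introT andP (conj da1 da2)) ea) (conj (introT andP (conj dt1 dt2)) et) qa qt.
by move=> e; move: h1; rewrite e /= ltxx.
Qed.

Lemma disj_order {R : realType} (S1 : seq (seg R)) (a b : seg R) (z z' : R) :
  disjS S1 -> a \in S1 -> b \in S1 -> a != b ->
  indom a z -> indom b z -> indom a z' -> indom b z' ->
  segval a z <= segval b z -> segval a z' < segval b z'.
Proof.
move=> hd aS bS nab da db da' db' hz; rewrite ltNge; apply/negP => hz'.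
set d0 := segval b z - segval a z.
set d1 := segval b z' - segval a z'.
have ed1 : d1 = d0 + (slope b - slope a) * (z' - z).
  by rewrite /d1 /d0 (segval_aff b z' z) (segval_aff a z' z); ring.
have [e0|p0] := eqVneq d0 0.
  apply: (hd a b aS bS nab (z, segval a z)); split; split => //=.
  by apply/eqP; rewrite eq_sym -subr_eq0; apply/eqP; exact: e0.
have d0p : 0 < d0 by rewrite lt_neqAle eq_sym p0 /d0 subr_ge0.
have d1n : d1 <= 0 by rewrite /d1 subr_le0.
set lam := d0 / (d0 - d1).
have l0 : 0 <= lam by rewrite /lam divr_ge0 //; lra.
have l1 : lam <= 1 by rewrite /lam ler_pdivrMr; lra.
set x := z + lam * (z' - z).
have dx : forall s : seg R, indom s z -> indom s z' -> indom s x.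
  move=> s; rewrite /indom /x => /andP[u1 u2] /andP[v1 v2]; apply/andP; split; nra.
have ex : segval b x = segval a x.
  apply/eqP; rewrite -subr_eq0.
  have -> : segval b x - segval a x = d0 + (slope b - slope a) * (x - z).
    by rewrite /d0 (segval_aff b x z) (segval_aff a x z); ring.
  have -> : (slope b - slope a) * (x - z) = lam * (d1 - d0).
    by rewrite ed1 /x; ring.
  rewrite /lam; apply/eqP; field; lra.
apply: (hd a b aS bS nab (x, segval a x)); split; split => //=; exact: dx.
Qed.
Arguments disj_order {R S1 a b z z'}.
Arguments slopes_differ {R S1 S2 a t p}.


Definition dirok {R : realType} (bH bD : bool) (a t : seg R) : bool :=
  if bH == bD then slope t < slope a else slope a < slope t.

Lemma core {R : realType} (S1 S2 : seq (seg R)) (bF bH bD : bool) (a t : seg R) (p q : point R) :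
  disjS S1 -> a \in S1 -> t \in S2 -> on_seg a p -> on_seg t p ->
  envb S1 bF p -> dirok bH bD a t -> envb S1 bF q -> envb S2 bH q ->
  (if bD then p.1 < q.1 else q.1 < p.1) ->
  (forall s, s \in S1 ++ S2 -> ~~ btw p.1 q.1 (sx1 s) && ~~ btw p.1 q.1 (sx2 s)) -> False.
Proof.
move=> hd aS tS [da ea] [dt et] hp hdir hq1 hq2 hzz hne.
have mv : forall s, s \in S1 ++ S2 -> indom s p.1 -> indom s q.1.
  by move=> s sS ds; have /andP[n1 n2] := hne s sS; exact: indom_move ds n1 n2.
have mv' : forall s, s \in S1 ++ S2 -> indom s q.1 -> indom s p.1.
  move=> s sS ds; have /andP[n1 n2] := hne s sS.
  by apply: (indom_move ds); rewrite btwC.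
have aS' : a \in S1 ++ S2 by rewrite mem_cat aS.
have tS' : t \in S1 ++ S2 by rewrite mem_cat tS orbT.
have da' := mv a aS' da; have dt' := mv t tS' dt.
have key : if bH then segval t q.1 < segval a q.1 else segval a q.1 < segval t q.1.
  rewrite (segval_aff t q.1 p.1) (segval_aff a q.1 p.1) -et -ea.
  move: hdir hzz; rewrite /dirok; destruct bH, bD => /= h1 h2; nra.
have qt : if bH then q.2 <= segval t q.1 else segval t q.1 <= q.2.
  by move: hq2; rewrite /envb; destruct bH => -[_ h]; apply: h.
have qa : if bH then segval a q.1 <= q.2 else q.2 <= segval a q.1.
  move: hq1 hp; rewrite /envb; destruct bH, bF => -[[b bS [db eb]] h] [_ hp'].
  - rewrite eb; have [->|nab] := eqVneq a b; first by [].
    have bS' : b \in S1 ++ S2 by rewrite mem_cat bS.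
    apply: ltW; apply: (disj_order hd aS bS nab da (mv' b bS' db) da' db).
    by rewrite -ea; apply: hp' => //; exact: mv' b bS' db.
  - by apply: h.
  - by apply: h.
  - rewrite eb; have [->|nab] := eqVneq a b; first by [].
    have bS' : b \in S1 ++ S2 by rewrite mem_cat bS.
    apply: ltW; apply: (disj_order hd bS aS _ (mv' b bS' db) da db da').
      by rewrite eq_sym.
    by rewrite -ea; apply: hp' => //; exact: mv' b bS' db.
by move: key qt qa; destruct bH => /= h1 h2 h3; lra.
Qed.
Arguments core {R S1 S2 bF bH bD a t p q}.


Definition endpts {R : realType} (l : seq (seg R)) : seq R :=
  foldr (fun s acc => sx1 s :: sx2 s :: acc) [::] l.

Lemma size_endpts {R : realType} (l : seq (seg R)) : size (endpts l) = (2 * size l)%N.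
Proof. by elim: l => //= s l ->; rewrite mulnS. Qed.

Lemma mem_endpts {R : realType} (l : seq (seg R)) s :
  s \in l -> (sx1 s \in endpts l) && (sx2 s \in endpts l).
Proof.
elim: l => //= s' l IH; rewrite !inE => /orP[/eqP->|/IH/andP[h1 h2]].
  by rewrite !eqxx !orbT.
by rewrite h1 h2 !orbT.
Qed.

Definition Eset {R : realType} (S1 S2 : seq (seg R)) := endpts (undup (S1 ++ S2)).

Definition pt {R : realType} (s1 s2 : seg R) : point R :=
  match pselect (exists p, on_seg s1 p /\ on_seg s2 p) with
  | left h => projT1 (cid h)
  | right _ => (0, 0)
  end.

Lemma pt_spec {R : realType} (s1 s2 : seg R) :
  (exists p, on_seg s1 p /\ on_seg s2 p) -> on_seg s1 (pt s1 s2) /\ on_seg s2 (pt s1 s2).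
Proof.
rewrite /pt; case: pselect => // h _; exact: (projT2 (cid h)).
Qed.

Definition Univ {R : realType} (S1 S2 : seq (seg R)) : seq (point R) :=
  [seq pt s1 s2 | s1 <- S1, s2 <- S2].

Lemma in_univ {R : realType} (S1 S2 : seq (seg R)) (s1 s2 : seg R) (p : point R) :
  onceS S1 S2 -> s1 \in S1 -> s2 \in S2 -> on_seg s1 p -> on_seg s2 p -> p \in Univ S1 S2.
Proof.
move=> hon h1 h2 o1 o2.
have [q1 q2] := @pt_spec R s1 s2 (ex_intro _ p (conj o1 o2)).
have -> : p = pt s1 s2 by apply: (hon s1 s2 h1 h2).
exact: allpairs_f.
Qed.

Definition fam {R : realType} (S1 S2 : seq (seg R)) bF bH bD (p : point R) : Prop :=
  [/\ envb S1 bF p, envb S2 bH p, p.1 \notin Eset S1 S2 &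
    exists a t, [/\ a \in S1, t \in S2, on_seg a p, on_seg t p & dirok bH bD a t]].

Definition endf {R : realType} (S1 S2 : seq (seg R)) bF (p : point R) : Prop :=
  envb S1 bF p /\ p.1 \in Eset S1 S2.

Definition lf {R : realType} (S1 S2 : seq (seg R)) bF bH bD :=
  undup (filter (fun p => `[< fam S1 S2 bF bH bD p >]) (Univ S1 S2)).

Definition lend {R : realType} (S1 S2 : seq (seg R)) bF :=
  undup (filter (fun p => `[< endf S1 S2 bF p >]) (Univ S1 S2)).

Lemma count_lt {R : realType} (E : seq R) x y e : e \in E -> x <= e -> e < y ->
  (count (fun h : R => (h < x)%R) E < count (fun h : R => (h < y)%R) E)%N.
Proof.
move=> + hx hy; elim: E => //= h E IH; rewrite inE => /orP[/eqP<-|eE].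
  rewrite ltNge hx hy /= add0n add1n ltnS; apply: sub_count => u /= hu.
  exact: lt_trans hu (le_lt_trans hx hy).
have := IH eE; case hx': (h < x); case hy': (h < y) => //=; try lia.
by move: hy'; rewrite (lt_trans hx' (le_lt_trans hx hy)).
Qed.

Arguments count_lt {R E x y e}.

Lemma inj_bound (T : eqType) (l : seq T) (f : T -> nat) k : uniq l -> {in l &, injective f} ->
  (forall x, x \in l -> f x < k)%N -> (size l <= k)%N.
Proof.
move=> ul fi hk; rewrite -(size_map f) -(size_iota 0 k); apply: uniq_leq_size.
  by rewrite map_inj_in_uniq.
by move=> y /mapP[x xl ->]; rewrite mem_iota add0n /=; exact: hk.
Qed.

Lemma hne_of {R : realType} (S1 S2 : seq (seg R)) z z' :
  ~~ has (btw z z') (Eset S1 S2) ->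
  forall s, s \in S1 ++ S2 -> ~~ btw z z' (sx1 s) && ~~ btw z z' (sx2 s).
Proof.
move/hasPn => h s sS; rewrite -mem_undup in sS; have /andP[h1 h2] := @mem_endpts R _ _ sS.
by rewrite !h.
Qed.

Arguments hne_of {R S1 S2 z z'}.

Lemma famlt {R : realType} (S1 S2 : seq (seg R)) bF bH bD (p q : point R) :
  disjS S1 -> fam S1 S2 bF bH bD p -> fam S1 S2 bF bH bD q -> p.1 < q.1 ->
  (count (fun e : R => (e < p.1)%R) (Eset S1 S2) < count (fun e : R => (e < q.1)%R) (Eset S1 S2))%N.
Proof.
move=> hd [hp1 hp2 hpE [a [t [aS tS ap tp dp]]]] [hq1 hq2 hqE [a' [t' [aS' tS' aq tq dq]]]] lt.
case hh: (has (btw p.1 q.1) (Eset S1 S2)).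
  case/hasP: hh => e eE /orP[/andP[h1 h2]|/andP[h1 h2]]; last first.
    by exfalso; lra.
  apply: (count_lt eE h1); rewrite lt_neqAle h2 andbT.
  by apply/eqP => ee; move: hqE; rewrite -ee eE.
exfalso; move/negbT: hh => hh.
case: bD hp1 hp2 hpE dp hq1 hq2 hqE dq => hp1 hp2 hpE dp hq1 hq2 hqE dq.
  exact: (core hd aS tS ap tp hp1 dp hq1 hq2 lt (hne_of hh)).
apply: (core hd aS' tS' aq tq hq1 dq hp1 hp2 lt).
move=> s sS; rewrite !(btwC q.1); exact: hne_of hh s sS.
Qed.

Arguments famlt {R S1 S2 bF bH bD p q}.

Lemma lf_bound {R : realType} (S1 S2 : seq (seg R)) bF bH bD :
  disjS S1 -> (size (lf S1 S2 bF bH bD) <= (size (Eset S1 S2)).+1)%N.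
Proof.
move=> hd; apply: (@inj_bound _ _ (fun p => count (fun e : R => (e < p.1)%R) (Eset S1 S2))).
- exact: undup_uniq.
- move=> p q; rewrite !mem_undup !mem_filter => /andP[/asboolP hp _] /andP[/asboolP hq _] e.
  case: (ltgtP p.1 q.1) => h.
  + by have := famlt hd hp hq h; rewrite e ltnn.
  + by have := famlt hd hq hp h; rewrite e ltnn.
  + by case: hp => hp1 _ _ _; case: hq => hq1 _ _ _; exact: class_inj hp1 hq1 h.
- by move=> x _; rewrite ltnS count_size.
Qed.

Lemma lend_bound {R : realType} (S1 S2 : seq (seg R)) bF :
  (size (lend S1 S2 bF) <= size (Eset S1 S2))%N.
Proof.
apply: (@inj_bound _ _ (fun p : point R => index p.1 (Eset S1 S2))).
- exact: undup_uniq.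
- move=> p q; rewrite !mem_undup !mem_filter => /andP[/asboolP [hp1 hp2] _] /andP[/asboolP [hq1 hq2] _] e.
  apply: class_inj hp1 hq1 _.
  by rewrite -(nth_index 0 hp2) -(nth_index 0 hq2) e.
- by move=> x; rewrite mem_undup mem_filter => /andP[/asboolP [_ h] _]; rewrite index_mem.
Qed.
Arguments in_univ {R S1 S2 s1 s2 p}.


Definition bigL {R : realType} (S1 S2 : seq (seg R)) : seq (point R) :=
  lend S1 S2 true ++ lend S1 S2 false ++
  lf S1 S2 true true true ++ lf S1 S2 true true false ++
  lf S1 S2 true false true ++ lf S1 S2 true false false ++
  lf S1 S2 false true true ++ lf S1 S2 false true false ++
  lf S1 S2 false false true ++ lf S1 S2 false false false.

Lemma lf_bigL {R : realType} (S1 S2 : seq (seg R)) bF bH bD p :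
  p \in lf S1 S2 bF bH bD -> p \in bigL S1 S2.
Proof. by rewrite /bigL; case: bF; case: bH; case: bD; rewrite !mem_cat => ->; rewrite ?orbT. Qed.

Arguments lf_bigL {R S1 S2 bF bH bD p}.

Lemma le_bigL {R : realType} (S1 S2 : seq (seg R)) bF p :
  p \in lend S1 S2 bF -> p \in bigL S1 S2.
Proof. by rewrite /bigL; case: bF; rewrite !mem_cat => ->; rewrite ?orbT. Qed.

Arguments le_bigL {R S1 S2 bF p}.

Theorem lemma2 :
  exists c : nat,
  forall (R : realType) (S1 S2 : seq (seg R)),
    (forall s, s \in S1 ++ S2 -> nonvertical s) ->
    (* no two (distinct) segments of S1 intersect *)
    (forall s s', s \in S1 -> s' \in S1 -> s != s' ->
       forall p : point R, ~ (on_seg s p /\ on_seg s' p)) ->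
    (* a segment of S1 and a segment of S2 meet in at most one point *)
    (forall s1 s2, s1 \in S1 -> s2 \in S2 ->
       forall p q : point R, on_seg s1 p -> on_seg s2 p ->
         on_seg s1 q -> on_seg s2 q -> p = q) ->
    exists L : seq (point R),
      (size L <= c * size (undup (S1 ++ S2)) + c)%N /\
      forall p : point R,
        (exists2 s1, s1 \in S1 & exists2 s2, s2 \in S2 &
           on_seg s1 p /\ on_seg s2 p) ->
        on_env S1 p -> on_env S2 p -> p \in L.
Proof.
exists 20%N => R S1 S2 _ hd hon; exists (bigL S1 S2); split.
  have hE : size (Eset S1 S2) = (2 * size (undup (S1 ++ S2)))%N by rewrite size_endpts.
  rewrite /bigL !size_cat.
  have := lend_bound S1 S2 true; have := lend_bound S1 S2 false.
  have := lf_bound S1 S2 true true true hd; have := lf_bound S1 S2 true true false hd.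
  have := lf_bound S1 S2 true false true hd; have := lf_bound S1 S2 true false false hd.
  have := lf_bound S1 S2 false true true hd; have := lf_bound S1 S2 false true false hd.
  have := lf_bound S1 S2 false false true hd; have := lf_bound S1 S2 false false false hd.
  rewrite hE; set m := size (undup _); move=> h1 h2 h3 h4 h5 h6 h7 h8 h9 h10.
  apply: leq_trans (leq_add h10 (leq_add h9 (leq_add h8 (leq_add h7 (leq_add h6 (leq_add h5 (leq_add h4 (leq_add h3 (leq_add h2 h1))))))))) _.
  lia.
move=> p [s1 s1S [s2 s2S [o1 o2]]] e1 e2.
have pU := in_univ hon s1S s2S o1 o2.
have [bF hF] : exists bF, envb S1 bF p by case: e1 => h; [exists true|exists false].
have [bH hH] : exists bH, envb S2 bH p by case: e2 => h; [exists true|exists false].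
case pE: (p.1 \in Eset S1 S2).
  apply: (le_bigL (bF := bF)); rewrite mem_undup mem_filter pU andbT.
  by apply/asboolP; split.
have s1S' : s1 \in undup (S1 ++ S2) by rewrite mem_undup mem_cat s1S.
have s2S' : s2 \in undup (S1 ++ S2) by rewrite mem_undup mem_cat s2S orbT.
have /andP[_ m1] := @mem_endpts R _ _ s1S'.
have /andP[_ m2] := @mem_endpts R _ _ s2S'.
have n1 : p.1 != sx2 s1 by apply/eqP => ee; move: pE; rewrite /Eset ee m1.
have n2 : p.1 != sx2 s2 by apply/eqP => ee; move: pE; rewrite /Eset ee m2.
have sd := slopes_differ hon s1S s2S o1 o2 n1 n2.
have [bD hD] : exists bD, dirok bH bD s1 s2.
  case: (ltgtP (slope s2) (slope s1)) => hs.
  - by exists bH; rewrite /dirok eqxx.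
  - by exists (~~ bH); rewrite /dirok; case: bH {hH}.
  - by move: sd; rewrite hs eqxx.
apply: (lf_bigL (bF := bF) (bH := bH) (bD := bD)).
rewrite mem_undup mem_filter pU andbT; apply/asboolP; split => //.
  by rewrite pE.
by exists s1, s2.
Qed.
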